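(* Let $\mathcal{D}$ be a domain with $\mathcal{SP}\subseteq\mathcal{D}\subseteq\mathcal{U}$. If there is an own-peak-only rule on $\mathcal{E}_{\mathcal{D}}$ that satisfies efficiency, the equal division guarantee, and not obvious manipulability (NOM), then $\mathcal{D}\subseteq\mathcal{C}$.
   Context: Let $N=\{1,\dots,n\}$ be a finite set of agents. $\mathcal{U}$ is the set of continuous complete preorders $R_i$ on $\mathbb{R}_+\cup\{\infty\}$ ($P_i$ strict, $I_i$ indifference), with peak $p(R_i)=\{x:xR_iy\ \forall y\}$, $\underline{p}(R_i)=\inf p(R_i)$, $\overline{p}(R_i)=\sup p(R_i)$. $R_i$ is single-peaked if $p(R_i)$ is a singleton and for $x,x'\in\mathbb{R}_+$, $xP_ix'$ whenever $x'<x\le p(R_i)$ or $p(R_i)\le x<x'$ ($\mathcal{SP}$ = set of these). $R_i$ is convex if $p(R_i)=[\underline{p}(R_i),\overline{p}(R_i)]$ and for $x,x'\in\mathbb{R}_+$, $xR_ix'$ whenever $x'<x\le\underline{p}(R_i)$ or $\overline{p}(R_i)\le x<x'$ ($\mathcal{C}$ = set of these). For $\mathcal{D}\subseteq\mathcal{U}$, an economy is $(R,\Omega)$, $R\in\mathcal{D}^n$, $\Omega>0$; $\mathcal{E}_{\mathcal{D}}$ is the set of economies; a rule is a map $\varphi:\mathcal{E}_{\mathcal{D}}\to\mathbb{R}^n_+$ with $\sum_j\varphi_j(R,\Omega)=\Omega$. Efficiency: no $x\in\mathbb{R}^n_+$ with $\sum_jx_j=\Omega$ has $x_iR_i\varphi_i(R,\Omega)$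 for all $i$ and $x_iP_i\varphi_i(R,\Omega)$ for some $i$. Own-peak-only: for $R_i'\in\mathcal{D}$ with $p(R_i')=p(R_i)$, $\varphi_i(R,\Omega)=\varphi_i(R_i',R_{-i},\Omega)$. Equal division guarantee: $\Omega/n\in p(R_i)$ implies $\varphi_i(R,\Omega)I_i\Omega/n$. Option set $O^\varphi(R_i,\Omega)=\{\varphi_i(R_i,R_{-i},\Omega):R_{-i}\in\mathcal{D}^{n-1}\}$; $R_i'\in\mathcal{D}$ is a manipulation at $(R_i,\Omega)$ if $\varphi_i(R_i',R_{-i},\Omega)P_i\varphi_i(R_i,R_{-i},\Omega)$ for some $R_{-i}$, an obvious manipulation if moreover each $x'\in O^\varphi(R_i',\Omega)$ satisfies $x'P_ix$ for some $x\in O^\varphi(R_i,\Omega)$; NOM means no obvious manipulation exists. *)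

(* Defs.v *)
From mathcomp Require Import all_boot all_order all_algebra.
From mathcomp Require Import all_classical all_reals all_analysis.
From mathcomp Require Import Rstruct Rstruct_topology.
Set Implicit Arguments. Unset Strict Implicit. Unset Printing Implicit Defensive.
Import Order.TTheory GRing.Theory Num.Theory.
Local Open Scope classical_set_scope.
Local Open Scope ring_scope.
Local Open Scope ereal_scope.

Notation real := Rdefinitions.R.
(* consumption space R_+ \cup {oo} is the subset [0, +oo] of the extended reals *)
Definition cons_space : set (\bar real) := [set x | 0 <= x].

(* a preference is a weak preference relation: pref x y  means  x R_i y *)
Definition pref := \bar real -> \bar real -> Prop.

Definition strict (Ri : pref) (x y : \bar real) : Prop := Ri x y /\ ~ Ri y x.
Definition indiff (Ri : pref) (x y : \bar real) : Prop := Ri x y /\ Ri y x.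

(* The relation is
   required to live on [0,+oo] (so a preference is identified with its
   restriction); continuity = closed upper and lower contour sets (closed in
   [0,+oo], equivalently closed in \bar R since [0,+oo] is closed). *)
Definition in_U (Ri : pref) : Prop :=
  (forall x y, Ri x y -> cons_space x /\ cons_space y) /\
  [/\ (forall x, cons_space x -> Ri x x),
      (forall x y, cons_space x -> cons_space y -> Ri x y \/ Ri y x),
      (forall x y z, Ri x y -> Ri y z -> Ri x z),
      (forall y, cons_space y -> closed [set x | Ri x y]) &
      (forall y, cons_space y -> closed [set x | Ri y x])].

Definition peak (Ri : pref) : set (\bar real) :=
  [set x | cons_space x /\ forall y, cons_space y -> Ri x y].
Definition peak_lo (Ri : pref) : \bar real := ereal_inf (peak Ri).
Definition peak_hi (Ri : pref) : \bar real := ereal_sup (peak Ri).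

Definition single_peaked (Ri : pref) : Prop :=
  in_U Ri /\ exists p : \bar real, peak Ri = [set p] /\
    forall x x' : real, (0 <= x)%R -> (0 <= x')%R ->
      ((x'%:E < x%:E /\ x%:E <= p) \/ (p <= x%:E /\ x%:E < x'%:E)) ->
      strict Ri x%:E x'%:E.

Definition convex_pref (Ri : pref) : Prop :=
  [/\ in_U Ri,
      peak Ri = [set x | peak_lo Ri <= x <= peak_hi Ri] &
      forall x x' : real, (0 <= x)%R -> (0 <= x')%R ->
        ((x'%:E < x%:E /\ x%:E <= peak_lo Ri) \/
         (peak_hi Ri <= x%:E /\ x%:E < x'%:E)) ->
        Ri x%:E x'%:E].

Definition profile (n : nat) := 'I_n -> pref.
Definition in_dom (D : set pref) n (Rp : profile n) : Prop := forall j, D (Rp j).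
Definition upd n (Rp : profile n) (i : 'I_n) (Ri : pref) : profile n :=
  fun j => if j == i then Ri else Rp j.

Definition rule_type (n : nat) := profile n -> real -> 'I_n -> real.
Definition is_rule (D : set pref) n (phi : rule_type n) : Prop :=
  forall Rp Om, in_dom D Rp -> (0 < Om)%R ->
    (forall j, (0 <= phi Rp Om j)%R) /\ (\sum_(j < n) phi Rp Om j = Om)%R.

Definition efficient (D : set pref) n (phi : rule_type n) : Prop :=
  forall Rp Om, in_dom D Rp -> (0 < Om)%R ->
    ~ exists x : 'I_n -> real,
      [/\ forall j, (0 <= x j)%R, (\sum_(j < n) x j = Om)%R,
          (forall j, Rp j (x j)%:E (phi Rp Om j)%:E) &
          exists j, strict (Rp j) (x j)%:E (phi Rp Om j)%:E].

Definition own_peak_only (D : set pref) n (phi : rule_type n) : Prop :=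
  forall Rp Om i Ri', in_dom D Rp -> (0 < Om)%R -> D Ri' ->
    peak Ri' = peak (Rp i) -> phi Rp Om i = phi (upd Rp i Ri') Om i.

Definition equal_division_guarantee (D : set pref) n (phi : rule_type n) : Prop :=
  forall Rp Om i, in_dom D Rp -> (0 < Om)%R ->
    peak (Rp i) (Om / n%:R)%R%:E ->
    indiff (Rp i) (phi Rp Om i)%:E (Om / n%:R)%R%:E.

Definition option_set (D : set pref) n (phi : rule_type n) (i : 'I_n)
  (Ri : pref) (Om : real) : set real :=
  [set v | exists Rp : profile n, in_dom D (upd Rp i Ri) /\ v = phi (upd Rp i Ri) Om i].

Definition manipulation (D : set pref) n (phi : rule_type n) (i : 'I_n)
  (Ri Ri' : pref) (Om : real) : Prop :=
  exists Rp : profile n, in_dom D (upd Rp i Ri) /\ D Ri' /\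
    strict Ri (phi (upd Rp i Ri') Om i)%:E (phi (upd Rp i Ri) Om i)%:E.

Definition obvious_manipulation (D : set pref) n (phi : rule_type n) (i : 'I_n)
  (Ri Ri' : pref) (Om : real) : Prop :=
  manipulation D phi i Ri Ri' Om /\
  forall x', option_set D phi i Ri' Om x' ->
    exists2 x, option_set D phi i Ri Om x & strict Ri x'%:E x%:E.

Definition NOM (D : set pref) n (phi : rule_type n) : Prop :=
  forall i Ri Ri' Om, D Ri -> D Ri' -> (0 < Om)%R ->
    ~ obvious_manipulation D phi i Ri Ri' Om.

(* Main.v *)
Require Import Defs.
From mathcomp Require Import all_boot all_order all_algebra.
From mathcomp Require Import all_classical all_reals all_analysis.
From mathcomp Require Import Rstruct Rstruct_topology.
From mathcomp Require Import lra.
Local Open Scope classical_set_scope.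

Module Helpers.
Set Implicit Arguments. Unset Strict Implicit. Unset Printing Implicit Defensive.
Import Order.TTheory GRing.Theory Num.Theory.
Import numFieldNormedType.Exports.

Section File_H.
Local Open Scope classical_set_scope.
Local Open Scope ring_scope.
Local Open Scope ereal_scope.
Section U.
Variable Ri : pref.
Hypothesis HU : in_U Ri.

Lemma U_cons x y : Ri x y -> cons_space x /\ cons_space y.
Proof. by case: HU => H _; apply: H. Qed.
Lemma U_refl x : cons_space x -> Ri x x.
Proof. by case: HU => _ [] H _ _ _ _; apply: H. Qed.
Lemma U_total x y : cons_space x -> cons_space y -> Ri x y \/ Ri y x.
Proof. by case: HU => _ [] _ H _ _ _; apply: H. Qed.
Lemma U_trans x y z : Ri x y -> Ri y z -> Ri x z.
Proof. by case: HU => _ [] _ _ H _ _; apply: H. Qed.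
Lemma U_cl1 y : cons_space y -> closed [set x | Ri x y].
Proof. by case: HU => _ [] _ _ _ H _; apply: H. Qed.
Lemma U_cl2 y : cons_space y -> closed [set x | Ri y x].
Proof. by case: HU => _ [] _ _ _ _ H; apply: H. Qed.

Lemma U_strict x y : cons_space x -> cons_space y -> ~ Ri x y -> strict Ri y x.
Proof. by move=> cx cy nxy; split=> //; case: (U_total cx cy). Qed.

Lemma U_nstrict x y : cons_space x -> cons_space y -> ~ strict Ri x y -> Ri y x.
Proof.
move=> cx cy ns; case: (U_total cx cy) => // h.
by apply: contrapT => nyx; apply: ns.
Qed.

Lemma peak_strict p z : peak Ri p -> cons_space z -> ~ peak Ri z -> strict Ri p z.
Proof.
move=> [cp pp] cz nz; split; first exact: pp.
move=> zp; apply: nz; split=> // y cy; apply: U_trans zp (pp _ cy).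
Qed.
End U.

End File_H.

Section File_T.
Local Open Scope classical_set_scope.
Local Open Scope ring_scope.
Local Open Scope ereal_scope.
Lemma closed_pre (A : set (\bar real)) : closed A -> closed [set r : real | A r%:E].
Proof.
move=> cA r clr; apply: cA => B nB.
have nB' : nbhs r (fun x : real => B x%:E) by apply/nbhs_EFin.
case: (clr _ nB') => y [Ay By]; by exists y%:E.
Qed.

Lemma closed_pinfty (A : set (\bar real)) : closed A -> ~ A +oo ->
  exists M : real, forall w : real, (M < w)%R -> ~ A w%:E.
Proof.
move=> cA nA.
have oA : open (~` A) by apply: closed_openC.
have nb : nbhs +oo (~` A) by move: oA; rewrite openE => /(_ +oo nA).
case/nbhs_ereal_pinfty: nb => _ [M [_ HM]].
by exists M => w Mw; apply: HM.
Qed.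

Lemma closed_approx (A : set real) x : closed A ->
  (forall e : real, (0 < e)%R -> exists a, A a /\ (`|a - x| < e)%R) -> A x.
Proof.
move=> cA H; apply: cA => B /nbhs_ballP [e e0 Be].
case: (H e e0) => a [Aa ae]; exists a; split=> //; apply: Be.
by rewrite /ball /= distrC.
Qed.

Lemma closed_real_nbhs (A : set (\bar real)) (v : real) : closed A -> ~ A v%:E ->
  exists2 e : real, (0 < e)%R & forall w : real, (`|w - v| < e)%R -> ~ A w%:E.
Proof.
move=> cA nA.
have oA : open (~` A) by apply: closed_openC.
have nb : nbhs v%:E (~` A) by move: oA; rewrite openE => /(_ v%:E nA).
move/nbhs_EFin: nb => /nbhs_ballP [e e0 Be].
exists e => // w wv; apply: Be; by rewrite /ball /= distrC.
Qed.

Lemma closed_inf_mem (S : set (\bar real)) : closed S -> S `<=` cons_space ->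
  S !=set0 -> S (ereal_inf S).
Proof.
move=> cS Sc [p Sp].
have l0 : 0 <= ereal_inf S by apply: le_ereal_inf_tmp => x /Sc.
have lp : ereal_inf S <= p by apply: ereal_inf_lbound.
move Hl : (ereal_inf S) l0 lp => l l0 lp.
case: l Hl l0 lp => [v | | ] Hl l0 lp //.
- apply: contrapT => nS.
  have [e e0 He] := closed_real_nbhs cS nS.
  have : ereal_inf S < (v + e)%:E by rewrite Hl lte_fin; lra.
  case/ereal_inf_lt => y Sy ylt.
  have vy : v%:E <= y by rewrite -Hl; apply: ereal_inf_lbound.
  case: y Sy ylt vy => [y | | ] Sy ylt vy //.
  all: try by move: vy; rewrite leeNy_eq.
  rewrite !lte_fin lee_fin in ylt vy.
  apply: (He y) => //; rewrite ger0_norm; lra.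
- by move: lp; rewrite leye_eq => /eqP <-.
Qed.

Lemma closed_sup_mem (S : set (\bar real)) : closed S -> S `<=` cons_space ->
  S !=set0 -> S (ereal_sup S).
Proof.
move=> cS Sc [p Sp].
have lp : p <= ereal_sup S by apply: ereal_sup_ubound.
have p0 : 0 <= p by apply: Sc.
move Hl : (ereal_sup S) lp => l lp.
case: l Hl lp => [v | | ] Hl lp.
- apply: contrapT => nS.
  have [e e0 He] := closed_real_nbhs cS nS.
  have : (v - e)%:E < ereal_sup S by rewrite Hl lte_fin; lra.
  case/ereal_sup_gt => y Sy ylt.
  have vy : y <= v%:E by rewrite -Hl; apply: ereal_sup_ubound.
  have y0 : 0 <= y by apply: Sc.
  case: y Sy ylt vy y0 => [y | | ] Sy ylt vy y0 //.
  rewrite !lte_fin lee_fin in ylt vy.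
  apply: (He y) => //; rewrite ler0_norm; lra.
- apply: contrapT => nS.
  have [M HM] := closed_pinfty cS nS.
  have : M%:E < ereal_sup S by rewrite Hl ltry.
  case/ereal_sup_gt => y Sy ylt.
  case: y Sy ylt => [y | | ] Sy ylt //.
  all: try by have := Sc _ Sy.
  by apply: (HM y) => //; rewrite -lte_fin.
- by have := le_trans p0 lp.
Qed.

End File_T.

Section File_V.
Local Open Scope classical_set_scope.
Local Open Scope ring_scope.
Local Open Scope ereal_scope.
Section V.
Variable Ri : pref.
Hypothesis HU : in_U Ri.

Lemma cons_fin (x : real) : (0 <= x)%R -> cons_space x%:E.
Proof. by rewrite /cons_space /= lee_fin. Qed.

Lemma pinfty_better (x : real) : (0 <= x)%R -> strict Ri +oo x%:E ->
  exists c : real, (x < c)%R /\ strict Ri c%:E x%:E.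
Proof.
move=> x0 [_ nx]; apply: contrapT => H.
have [M HM] := closed_pinfty (U_cl2 HU (cons_fin x0)) nx.
pose c := (Num.max M x + 1)%R.
have Mc : (M < c)%R by rewrite /c; have := le_max M x; case/orP: (le_total M x) => h;
  rewrite ?(max_r h) ?(max_l h); lra.
have xc : (x < c)%R by rewrite /c; case/orP: (le_total M x) => h;
  rewrite ?(max_r h) ?(max_l h); lra.
have nxc := HM c Mc.
apply: H; exists c; split=> //; apply: (U_strict HU (cons_fin x0) _ nxc); apply: cons_fin; lra.
Qed.

Lemma fin_max (K : set real) (z0 : real) : K z0 -> (forall w, K w -> 0 <= w)%R ->
  forall l : seq real, (forall z, z \in l -> K z) ->
  exists w, K w /\ forall z, z \in l -> Ri w%:E z%:E.
Proof.
move=> Kz0 K0; elim => [|z l IH] Hl.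
  by exists z0; split.
have [w [Kw Hw]] : exists w, K w /\ forall z, z \in l -> Ri w%:E z%:E.
  by apply: IH => y yl; apply: Hl; rewrite inE yl orbT.
have Kz : K z by apply: Hl; rewrite inE eqxx.
case: (U_total HU (cons_fin (K0 _ Kw)) (cons_fin (K0 _ Kz))) => h.
- exists w; split=> // y; rewrite inE => /orP [/eqP -> //| yl]; exact: Hw.
- exists z; split=> // y; rewrite inE => /orP [/eqP -> | yl].
  + have := U_refl HU (cons_fin (K0 _ Kz)). done.
  + by have := U_trans HU h (Hw _ yl).
Qed.

End V.

End File_V.

Section File_P.
Local Open Scope classical_set_scope.
Local Open Scope ring_scope.
Local Open Scope ereal_scope.
Lemma peak_ne (Ri : pref) : in_U Ri -> exists p, peak Ri p.
Proof.
move=> HU.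
case: (pselect (peak Ri +oo)) => [h|np]; first by exists +oo.
have [y [cy ny]] : exists y, cons_space y /\ ~ Ri +oo y.
  apply: contrapT => H; apply: np; split; first by rewrite /cons_space /= le0y.
  move=> y cy; apply: contrapT => n; apply: H; by exists y.
have sy := U_strict HU (@le0y _) cy ny.
case: y cy ny sy => [y0 | | ] cy ny sy.
2: by case: ny; apply: (U_refl HU); rewrite /cons_space /= le0y.
2: by move: cy; rewrite /cons_space /= leeNy_eq.
have y00 : (0 <= y0)%R by move: cy; rewrite /cons_space /= lee_fin.
have [M HM] := closed_pinfty (U_cl1 HU cy) ny.
pose M' := Num.max M y0.
have MM : (M <= M')%R by rewrite le_max lexx.
have yM : (y0 <= M')%R by rewrite le_max lexx orbT.
pose K := [set w : real | (0 <= w)%R /\ (w <= M')%R].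
have cK : compact K.
  have -> : K = `[0%R, M']%classic.
    apply/seteqP; split => w; rewrite /K /= in_itv /=.
    - by case=> -> ->.
    - by case/andP=> -> ->.
  exact: segment_compact.
have K0 : K 0%R by split => //; lra.
have Kpos : (forall w, K w -> 0 <= w)%R by move=> w [].
have [w Hw] : (\bigcap_(i in K) (K `&` [set w | Ri w%:E i%:E])) !=set0.
move: cK; rewrite compact_In0; apply.
- exists (fun z => [set w : real | Ri w%:E z%:E]) => // z Kz.
  apply: (closed_pre (A := [set x | Ri x z%:E])); apply: (U_cl1 HU); apply: cons_fin; exact: Kpos.
- move=> D' sD'.
  have [|w [Kw Hw]] := fin_max HU K0 Kpos (l := finmap.enum_fset D').
    by move=> z zD; have := sD' _ zD; rewrite inE.
  by exists w => z /= zD; split => //; apply: Hw.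
have [Kw _] := Hw 0%R K0.
exists w%:E; split; first exact: cons_fin (Kpos _ Kw).
case=> [v | | ] cv.
- have v0 : (0 <= v)%R by move: cv; rewrite /cons_space /= lee_fin.
  case: (lerP v M') => vM; first by have [] := Hw v (conj v0 vM).
  have nv := HM v (le_lt_trans MM vM).
  have sv := U_strict HU (cons_fin v0) cy nv.
  have [_ wy] := Hw y0 (conj y00 yM).
  by have := U_trans HU wy sv.1.
- have [_ wy] := Hw y0 (conj y00 yM).
  by have := U_trans HU wy sy.1.
- by move: cv; rewrite /cons_space /= leeNy_eq.
Qed.

End File_P.

Section File_W.
Local Open Scope classical_set_scope.
Local Open Scope ring_scope.
Lemma valley (Ri : pref) (HU : in_U Ri) (b m c : real) :
  0 <= b -> b < m -> m < c -> strict Ri b%:E m%:E -> strict Ri c%:E m%:E ->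
  exists s t : real, [/\ b < s, s < t, strict Ri t%:E s%:E &
    forall z : real, s <= z -> z <= t -> strict Ri b%:E z%:E].
Proof.
move=> b0 bm mc sbm scm.
have cb := cons_fin b0.
have cm : cons_space m%:E by apply: cons_fin; lra.
case: (pselect (forall z : real, m <= z -> z <= c -> strict Ri b%:E z%:E)) => [Hall|nH].
  by exists m, c; split.
have [z0 [mz0 [z0c z0b]]] : exists z0 : real, m <= z0 /\ z0 <= c /\ Ri z0%:E b%:E.
  apply: contrapT => nE; apply: nH => z mz zc; apply: contrapT => ns.
  apply: nE; exists z; split => //; split => //.
  by apply: (U_nstrict HU cb _ ns); apply: cons_fin; lra.
pose A := [set z : real | m <= z /\ Ri z%:E b%:E].
have hA : has_inf A by split; [exists z0 | exists m => z []].
pose c0 := inf A.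
have clA : closed A.
  apply: closedI; first exact: closed_ge.
  exact: (closed_pre (A := [set x | Ri x b%:E])) (U_cl1 HU cb).
have Ac0 : A c0.
  apply: (closed_approx clA) => e e0.
  have [a Aa ae] := inf_adherent e0 hA.
  have ca : c0 <= a by apply: ge_inf => //; case: hA.
  exists a; split => //; rewrite ger0_norm /c0; lra.
have mc0 : m <= c0 by apply: lb_le_inf; [exists z0 | move=> z []].
have mc0' : m < c0.
  rewrite lt_neqAle mc0 andbT; apply/eqP => e.
  by case: sbm => _; case: Ac0 => _; rewrite -e.
have Hbz : forall z : real, m <= z -> z < c0 -> strict Ri b%:E z%:E.
  move=> z mz zc; apply: contrapT => ns.
  have Az : A z by split => //; apply: (U_nstrict HU cb _ ns); apply: cons_fin; lra.
  have : c0 <= z by apply: ge_inf => //; case: hA.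
  lra.
have [s [t [ms [st [tc stt]]]]] : exists s t : real,
    m <= s /\ s < t /\ t < c0 /\ strict Ri t%:E s%:E.
  apply: contrapT => nE.
  have Hmw : forall w : real, m <= w -> w < c0 -> Ri m%:E w%:E.
    move=> w mw wc; case: (eqVneq m w) => [<-|nmw]; first exact: (U_refl HU cm).
    apply: (U_nstrict HU _ cm) => [|sw]; first by apply: cons_fin; lra.
    by apply: nE; exists m, w; split => //; split; [lra|split].
  have mc0R : Ri m%:E c0%:E.
    apply: (closed_approx (A := [set w | Ri m%:E w%:E])).
      exact: (closed_pre (A := [set x | Ri m%:E x])) (U_cl2 HU cm).
    move=> e e0; case: (lerP (c0 - e / 2) m) => h.
    - exists m; split; first exact: (U_refl HU cm).
      rewrite ler0_norm; lra.
    - exists (c0 - e / 2); split; first by apply: Hmw; lra.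
      rewrite ler0_norm; lra.
  by case: sbm => _; apply; apply: (U_trans HU mc0R); case: Ac0.
exists s, t; split => //; first lra.
move=> z sz zt; apply: Hbz; lra.
Qed.

End File_W.

Section File_Tn.
Local Open Scope classical_set_scope.
Local Open Scope ring_scope.
Definition tdist (q r : real) (x : \bar real) : \bar real :=
  match x with
  | EFin v => (if v <= q then q - v else r * (v - q))%:E
  | _ => +oo%E
  end.

Definition tent (q r : real) : pref := fun x y =>
  cons_space x /\ cons_space y /\ (tdist q r x <= tdist q r y)%E.

Section Tent.
Variables (q r : real).
Hypotheses (q0 : 0 <= q) (r0 : 0 < r).

Lemma tdist_ge0 x : (0 <= tdist q r x)%E.
Proof.
have R0 := r0; have Q0 := q0.
case: x => [v| |] //=; rewrite lee_fin; case: (lerP v q) => h.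
- lra.
- apply: mulr_ge0; lra.
Qed.

Lemma tdist_le0 (v : real) : (tdist q r v%:E <= 0)%E -> v = q.
Proof.
have R0 := r0; have Q0 := q0.
rewrite /= lee_fin; case: (lerP v q) => h.
- lra.
- move=> hh; have : 0 < r * (v - q) by apply: mulr_gt0; lra.
  lra.
Qed.

Lemma tdist_q : tdist q r q%:E = 0%E.
Proof. by rewrite /= lexx subrr. Qed.

Lemma keyB (c0 v : real) : (r * (v - q) <= c0) = (v <= q + c0 / r).
Proof.
have R0 := r0; have Q0 := q0.
have rt : r * (c0 / r) = c0 by rewrite mulrC divfK // gt_eqF.
set t := c0 / r in rt *.
apply/idP/idP => h; nra.
Qed.

Lemma keyB' (c0 v : real) : (c0 <= r * (v - q)) = (q + c0 / r <= v).
Proof.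
have R0 := r0; have Q0 := q0.
have rt : r * (c0 / r) = c0 by rewrite mulrC divfK // gt_eqF.
set t := c0 / r in rt *.
apply/idP/idP => h; nra.
Qed.

Lemma tent_cl1 y : closed [set x | tent q r x y].
Proof.
have R0 := r0; have Q0 := q0.
case: (pselect (cons_space y)) => cy; last first.
  have -> : [set x | tent q r x y] = set0.
    by apply/seteqP; split => x //= [_ []].
  exact: closed0.
have := tdist_ge0 y.
case Ey : (tdist q r y) => [c0| |] c00.
- have c0p : 0 <= c0 by rewrite -lee_fin.
  have -> : [set x | tent q r x y] =
      [set x | ((q - c0)%:E <= x)%E] `&` [set x | (x <= (q + c0 / r)%:E)%E]
      `&` [set x | (0 <= x)%E].
    apply/seteqP; split => x /=.
    + case=> cx [_]; rewrite Ey; move: cx.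
      case: x => [v| |] //=; rewrite /cons_space /= ?lee_fin => v0.
      have cr : 0 <= c0 / r by apply: divr_ge0; lra.
      case: (lerP v q) => h dv; (split; [split|lra]).
      * lra.
      * lra.
      * lra.
      * by rewrite -keyB.
    + case=> [[h1 h2] h3]; split => //; split => //; rewrite Ey.
      move: h1 h2 h3; case: x => [v| |] //=; rewrite ?lee_fin => h1 h2 h3.
      case: (lerP v q) => h; first lra.
      by rewrite keyB.
  apply: closedI; first apply: closedI.
  + exact: closed_ereal_le_ereal.
  + exact: closed_ereal_ge_ereal.
  + exact: closed_ereal_le_ereal.
- have -> : [set x | tent q r x y] = [set x | (0 <= x)%E].
    apply/seteqP; split => x /=; first by case.
    by move=> x0; split => //; split => //; rewrite Ey leey.
  exact: closed_ereal_le_ereal.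
- by move: c00; rewrite leeNy_eq.
Qed.

Lemma tent_cl2 y : closed [set x | tent q r y x].
Proof.
have R0 := r0; have Q0 := q0.
case: (pselect (cons_space y)) => cy; last first.
  have -> : [set x | tent q r y x] = set0.
    by apply/seteqP; split => x //= [].
  exact: closed0.
have := tdist_ge0 y.
case Ey : (tdist q r y) => [c0| |] c00.
- have c0p : 0 <= c0 by rewrite -lee_fin.
  have -> : [set x | tent q r y x] = [set x | (0 <= x)%E] `&`
      ([set x | (x <= (q - c0)%:E)%E] `|` [set x | ((q + c0 / r)%:E <= x)%E]).
    apply/seteqP; split => x /=.
    + case=> _ [cx dx]; rewrite Ey in dx; split => //; move: cx dx.
      case: x => [v| |] //=; rewrite /cons_space /= ?lee_fin => v0 dv.
      all: try by right; rewrite leey.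
      all: try by move: v0; rewrite leeNy_eq.
      move: dv; case: (lerP v q) => h dv; [left|right]; rewrite ?lee_fin; first lra.
      by rewrite -keyB'.
    + case=> x0 h; split => //; split => //; rewrite Ey.
      move: x0 h; case: x => [v| |] //=; rewrite ?lee_fin => x0.
      all: try by rewrite leey.
      all: try by move=> _; rewrite leey.
      case=> h; rewrite ?lee_fin in h; case: (lerP v q) => h'.
      * lra.
      * have : c0 / r >= 0 by apply: divr_ge0 => //; lra.
        lra.
      * have : c0 / r <= 0 by lra.
        rewrite ler_pdivrMr // mul0r => ?.
        lra.
      * by rewrite keyB'.
  apply: closedI; first exact: closed_ereal_le_ereal.
  apply: closedU; [exact: closed_ereal_ge_ereal | exact: closed_ereal_le_ereal].
- have -> : [set x | tent q r y x] = [set x | (+oo <= x)%E].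
    apply/seteqP; split => x /=.
    + case=> _ [cx]; rewrite Ey; case: x cx => [v| |] //=.
    + rewrite leye_eq => /eqP ->; split => //; split; first by rewrite /cons_space /= le0y.
      by rewrite Ey.
  exact: closed_ereal_le_ereal.
- by move: c00; rewrite leeNy_eq.
Qed.

Lemma tent_U : in_U (tent q r).
Proof.
have R0 := r0; have Q0 := q0.
split; first by move=> x y [? []].
split.
- by move=> x cx; split => //; split.
- move=> x y cx cy; case/orP: (le_total (tdist q r x) (tdist q r y)) => h.
  + by left.
  + by right.
- by move=> x y z [cx [cy h1]] [_ [cz h2]]; split => //; split => //; exact: le_trans h1 h2.
- by move=> y _; exact: tent_cl1.
- by move=> y _; exact: tent_cl2.
Qed.

Lemma tent_peak : peak (tent q r) = [set q%:E].
Proof.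
have R0 := r0; have Q0 := q0.
have cq : cons_space q%:E by apply: cons_fin.
apply/seteqP; split => x /=.
- case=> cx /(_ _ cq) [_ [_]]; rewrite tdist_q.
  case: x cx => [v| |] //= cx.
  all: try by move/tdist_le0 => ->.
  all: try by rewrite leye_eq.
  all: try by move: cx; rewrite /cons_space /= leeNy_eq.
- move=> ->; split => // y cy; split => //; split => //.
  rewrite tdist_q; exact: tdist_ge0.
Qed.

Lemma tent_SP : single_peaked (tent q r).
Proof.
have R0 := r0; have Q0 := q0.
split; first exact: tent_U.
exists q%:E; split; first exact: tent_peak.
move=> x x' x0 x'0 h.
have lt : (tdist q r x%:E < tdist q r x'%:E)%E.
  rewrite /= lte_fin; case: h => [[]|[]]; rewrite ?lte_fin ?lee_fin => h1 h2.
  - have -> : x <= q by [].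
    have -> : x' <= q by lra.
    lra.
  - have -> : x' <= q = false by apply/negbTE; rewrite -ltNge; lra.
    case: (lerP x q) => h3; nra.
split.
- by split; [apply: cons_fin|split; [apply: cons_fin|apply: ltW]].
- by case=> _ [_ h']; move: (lt_le_trans lt h'); rewrite ltxx.
Qed.
End Tent.

End File_Tn.

Section File_R.
Local Open Scope classical_set_scope.
Local Open Scope ring_scope.
Section Rule.
Variables (n : nat) (D : set pref) (phi : rule_type n).
Hypotheses (n2 : (2 <= n)%N) (hSP : single_peaked `<=` D) (hDU : D `<=` in_U)
  (hrule : is_rule D phi) (hopo : own_peak_only D phi) (heff : efficient D phi)
  (hedg : equal_division_guarantee D phi) (hnom : NOM D phi).

Lemma tentD q r : 0 <= q -> 0 < r -> D (tent q r).
Proof. by move=> q0 r0; apply: hSP; apply: tent_SP. Qed.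

Lemma n_gt0 : (0 : real) < n%:R.
Proof. by rewrite ltr0n; exact: ltnW n2. Qed.

Lemma tdiv_ge0 (Om : real) : 0 < Om -> 0 <= Om / n%:R.
Proof. move=> h; apply: divr_ge0; [lra | apply: ltW; exact: n_gt0]. Qed.

Lemma in_dom_upd (Rp : profile n) (k : 'I_n) (S : pref) : in_dom D Rp -> D S -> in_dom D (upd Rp k S).
Proof. by move=> dRp DS j; rewrite /upd; case: (j == k). Qed.

Lemma upd_same (Rp : profile n) (k : 'I_n) : upd Rp k (Rp k) = Rp.
Proof. by apply: funext => j; rewrite /upd; case: eqP => // ->. Qed.

Lemma upd_at (Rp : profile n) (k : 'I_n) (S : pref) : upd Rp k S k = S.
Proof. by rewrite /upd eqxx. Qed.

Lemma pin (Rp : profile n) (Om : real) (k : 'I_n) (r : real) : in_dom D Rp -> 0 < Om -> 0 < r ->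
  Rp k = tent (Om / n%:R) r -> phi Rp Om k = Om / n%:R.
Proof.
move=> dRp Om0 r0 Rk.
have t0 := tdiv_ge0 Om0.
have := hedg dRp Om0 (i := k).
rewrite Rk tent_peak // => /(_ erefl) [[_ [_ h]] _].
move: h; rewrite tdist_q //; exact: tdist_le0.
Qed.

Lemma nom_bound (Rp : profile n) (Om : real) (k : 'I_n) : in_dom D Rp -> 0 < Om ->
  Rp k (phi Rp Om k)%:E (Om / n%:R)%:E.
Proof.
move=> dRp Om0; apply: contrapT => nb.
have t0 := tdiv_ge0 Om0.
have HUk : in_U (Rp k) by apply: hDU; apply: dRp.
have p0 : 0 <= phi Rp Om k by case: (hrule dRp Om0) => h _; apply: h.
have st := U_strict HUk (cons_fin p0) (cons_fin t0) nb.
have DS : D (tent (Om / n%:R) 1) by apply: tentD.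
have pinS : forall Rp', in_dom D (upd Rp' k (tent (Om / n%:R) 1)) ->
    phi (upd Rp' k (tent (Om / n%:R) 1)) Om k = Om / n%:R.
  by move=> Rp' d'; apply: pin => //; rewrite upd_at.
apply: (hnom (i := k) (dRp k) DS Om0); split.
- rewrite /manipulation; exists Rp; rewrite upd_same; split => //; split => //.
  by rewrite pinS //; apply: in_dom_upd.
- move=> x' [Rp' [d' ->]]; rewrite pinS //.
  exists (phi Rp Om k) => //.
  by rewrite /option_set; exists Rp; rewrite upd_same.
Qed.

Let i0 : 'I_n := Ordinal (ltnW n2).
Let j0 : 'I_n := Ordinal n2.

Lemma i0j0 : (j0 != i0).
Proof. by []. Qed.

Lemma sum2 (f : 'I_n -> real) c : (forall k, k != i0 -> k != j0 -> f k = c) ->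
  \sum_(k < n) (f k - c) = f i0 - c + (f j0 - c).
Proof.
move=> H; rewrite (bigD1 i0) //= (bigD1 j0) //=.
rewrite big1 ?addr0 // => k /andP [ki kj]; by rewrite H // subrr.
Qed.

Lemma sum_const_t (Om : real) : \sum_(k < n) (Om / n%:R) = Om.
Proof.
rewrite sumr_const card_ord.
have -> : (Om / n%:R) *+ n = Om / n%:R * n%:R by rewrite mulr_natr.
rewrite divfK //.
by apply: lt0r_neq0; exact: n_gt0.
Qed.


Lemma patA (Ri : pref) (b s t : real) : D Ri -> 0 <= b -> b < s -> s < t ->
  strict Ri t%:E s%:E ->
  (forall z : real, s <= z -> z <= t -> strict Ri b%:E z%:E) -> False.
Proof.
move=> DRi b0 bs st stt Hz.
have HU := hDU DRi.
have ng := n_gt0.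
pose Om := t * n%:R.
have Om0 : 0 < Om by rewrite /Om; apply: mulr_gt0; lra.
have ht : Om / n%:R = t by rewrite /Om mulfK // lt0r_neq0.
have t0 : 0 <= t by lra.
pose q := t + (t - s).
have qdef : q = t + (t - s) by [].
have tq : t < q by rewrite qdef; lra.
have q0 : 0 <= q by lra.
pose Prof (S : pref) : profile n :=
  fun k => if k == i0 then Ri else if k == j0 then S else tent t 1.
have PSi : forall S, Prof S i0 = Ri by move=> S; rewrite /Prof eqxx.
have PSj : forall S, Prof S j0 = S by move=> S; rewrite /Prof (negbTE i0j0) eqxx.
have PSk : forall S k, k != i0 -> k != j0 -> Prof S k = tent t 1.
  by move=> S k ki kj; rewrite /Prof (negbTE ki) (negbTE kj).
have domP : forall S, D S -> in_dom D (Prof S).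
  move=> S DS k; rewrite /Prof; case: (k == i0) => //; case: (k == j0) => //.
  exact: tentD.
have othP : forall S, D S -> forall k, k != i0 -> k != j0 -> phi (Prof S) Om k = t.
  move=> S DS k ki kj; rewrite -ht; apply: (pin (domP _ DS) Om0 ltr01).
  by rewrite PSk // ht.
have sumt : \sum_(k < n) t = Om by rewrite -{1}ht sum_const_t.
have sumP : forall S, D S -> phi (Prof S) Om i0 + phi (Prof S) Om j0 = t + t.
  move=> S DS; have := sum2 (f := phi (Prof S) Om) (othP S DS).
  rewrite sumrB (proj2 (hrule (domP S DS) Om0)) sumt subrr => h; lra.
have updP : forall S S', upd (Prof S) j0 S' = Prof S'.
  move=> S S'; apply: funext => k; rewrite /upd /Prof.
  case: (eqVneq k j0) => [->|kj]; first by rewrite (negbTE i0j0).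
  by [].
have opo : forall S S', D S -> D S' -> peak S' = peak S ->
    phi (Prof S') Om j0 = phi (Prof S) Om j0.
  move=> S S' DS DS' pk.
  have := hopo (Rp := Prof S) (i := j0) (Ri' := S') (domP S DS) Om0 DS'.
  by rewrite PSj updP => /(_ pk) ->.
pose S0 := tent q 1.
have DS0 : D S0 by apply: tentD.
have [y Ey] : exists y, phi (Prof S0) Om j0 = y by eexists.
have [a Ea] : exists a, phi (Prof S0) Om i0 = a by eexists.
have ha : a + y = t + t by rewrite -Ea -Ey; exact: sumP.
have yt : t <= y.
  have := nom_bound j0 (domP S0 DS0) Om0.
  rewrite PSj Ey ht => -[_ [_]]; rewrite /= lee_fin (ltW tq).
  case: (lerP y q) => hy h; lra.
have yq : y <= q.
  case: (lerP y q) => // qy.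
  pose rr := (q - t + 1) / (y - q).
  have rr0 : 0 < rr by apply: divr_gt0; lra.
  have rre : rr * (y - q) = q - t + 1 by rewrite /rr divfK // gt_eqF // subr_gt0.
  have DS1 : D (tent q rr) by apply: tentD.
  have pk : peak (tent q rr) = peak S0 by rewrite !tent_peak //; lra.
  have := nom_bound j0 (domP _ DS1) Om0.
  rewrite PSj (opo _ _ DS0 DS1 pk) Ey ht => -[_ [_]].
  rewrite /= lee_fin (ltW tq).
  have -> : (y <= q) = false by apply/negbTE; rewrite -ltNge.
  lra.
case: (lerP a s) => hs.
  have as_ : a = s by lra.
  have := nom_bound i0 (domP S0 DS0) Om0.
  by rewrite PSi Ea ht as_; case: stt.
pose w := t + t - b.
have wdef : w = t + t - b by [].
have qw : q < w by rewrite /w /q; lra.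
pose rr2 := (q - y) / (w - q).
have yq' : y < q by lra.
have rr20 : 0 < rr2 by apply: divr_gt0; lra.
have rre2 : rr2 * (w - q) = q - y by rewrite /rr2 divfK // gt_eqF // subr_gt0.
have DS2 : D (tent q rr2) by apply: tentD.
have pk2 : peak (tent q rr2) = peak S0 by rewrite !tent_peak //; lra.
have Ey2 : phi (Prof (tent q rr2)) Om j0 = y by rewrite (opo _ _ DS0 DS2 pk2).
have Ea2 : phi (Prof (tent q rr2)) Om i0 = a.
  have := sumP _ DS2; rewrite Ey2; lra.
apply: (heff (domP _ DS2) Om0).
pose x : 'I_n -> real := fun k => if k == i0 then b else if k == j0 then w else t.
have xi0 : x i0 = b by rewrite /x eqxx.
have xj0 : x j0 = w by rewrite /x (negbTE i0j0) eqxx.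
have xk : forall k, k != i0 -> k != j0 -> x k = t.
  by move=> k ki kj; rewrite /x (negbTE ki) (negbTE kj).
exists x; split.
- move=> k; case: (eqVneq k i0) => [->|ki]; first by rewrite xi0.
  case: (eqVneq k j0) => [->|kj]; first by rewrite xj0; lra.
  by rewrite xk.
- have := sum2 xk; rewrite sumrB sumt xi0 xj0 => h.
  have : \sum_(k < n) x k = Om + (b - t + (w - t)) by rewrite -h; lra.
  rewrite /w => ->; lra.
- move=> k; case: (eqVneq k i0) => [->|ki].
    rewrite PSi xi0 Ea2; apply: (Hz a _ _).1; lra.
  case: (eqVneq k j0) => [->|kj].
    rewrite PSj xj0 Ey2; split; first by apply: cons_fin; lra.
    split; first by apply: cons_fin; lra.
    rewrite /= lee_fin (ltW yq').
    have -> : (w <= q) = false by apply/negbTE; rewrite -ltNge.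
    lra.
  rewrite PSk // xk // othP //.
- exists i0; rewrite PSi xi0 Ea2; apply: Hz; lra.
Qed.

End Rule.

End File_R.

Section File_M.
Local Open Scope classical_set_scope.
Local Open Scope ring_scope.
Lemma peak_closed (Ri : pref) : in_U Ri -> closed (peak Ri).
Proof.
move=> HU.
have -> : peak Ri = [set x | (0 <= x)%E] `&` \bigcap_(y in cons_space) [set x | Ri x y].
  apply/seteqP; split => x.
  - by case=> cx H; split => // y cy; apply: H.
  - by case=> cx H; split => // y cy; apply: H.
apply: closedI; first exact: closed_ereal_le_ereal.
apply: closed_bigI => y cy; exact: (U_cl1 HU).
Qed.

Lemma convex_of (Ri : pref) : in_U Ri ->
  (forall b s t : real, 0 <= b -> b < s -> s < t -> strict Ri t%:E s%:E ->
     (forall z : real, s <= z -> z <= t -> strict Ri b%:E z%:E) -> False) ->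
  convex_pref Ri.
Proof.
move=> HU pA.
have vA : forall b m c : real, 0 <= b -> b < m -> m < c ->
    strict Ri b%:E m%:E -> strict Ri c%:E m%:E -> False.
  move=> b m c b0 bm mc sb sc.
  have [s [t [bs st stt Hz]]] := valley HU b0 bm mc sb sc.
  exact: (pA b s t b0 bs st stt Hz).
have vAE : forall (b m : real) (ce : \bar real), 0 <= b -> b < m -> (m%:E < ce)%E ->
    strict Ri b%:E m%:E -> strict Ri ce m%:E -> False.
  move=> b m [c| |] b0 bm mc sb sc.
  - by apply: (vA b m c) => //; rewrite -lte_fin.
  - have m0 : 0 <= m by lra.
    have [c [mc' sc']] := pinfty_better HU m0 sc.
    exact: (vA b m c).
  - by move: mc; rewrite ltNge leNye.
have [p0 Pp0] := peak_ne HU.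
have pc : peak Ri `<=` cons_space by move=> x [].
have pne : peak Ri !=set0 by exists p0.
have Plo : peak Ri (peak_lo Ri) := closed_inf_mem (peak_closed HU) pc pne.
have Phi : peak Ri (peak_hi Ri) := closed_sup_mem (peak_closed HU) pc pne.
have lo0 : (0 <= (peak_lo Ri))%E by apply: pc.
have hi0 : (0 <= (peak_hi Ri))%E by apply: pc.
have lob : forall x, peak Ri x -> ((peak_lo Ri) <= x)%E by move=> x px; exact: ereal_inf_lbound.
have hib : forall x, peak Ri x -> (x <= (peak_hi Ri))%E by move=> x px; exact: ereal_sup_ubound.
split => //.
- apply/seteqP; split => x.
    by move=> px; rewrite /= (lob _ px) (hib _ px).
  move=> /= /andP [lx xh]; apply: contrapT => nx.
  have cx : cons_space x by apply: le_trans lo0 lx.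
  have lx' : ((peak_lo Ri) < x)%E by rewrite lt_neqAle lx andbT; apply/eqP => e; apply: nx; rewrite -e.
  have xh' : (x < (peak_hi Ri))%E by rewrite lt_neqAle xh andbT; apply/eqP => e; apply: nx; rewrite e.
  have [p1 P1 p1x] := ereal_inf_lt lx'.
  have [p2 P2 xp2] := ereal_sup_gt xh'.
  have s1 := peak_strict HU P1 cx nx.
  have s2 := peak_strict HU P2 cx nx.
  have p10 : (0 <= p1)%E by apply: pc.
  case: x cx lx xh nx lx' xh' p1x xp2 s1 s2 => [v| |] cx lx xh nx lx' xh' p1x xp2 s1 s2.
  + case: p1 P1 p1x s1 p10 => [u| |] P1 p1x s1 p10.
    all: try by [].
    have u0 : 0 <= u by rewrite -lee_fin.
    have uv : u < v by rewrite -lte_fin.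
    exact: (vAE u v p2 u0 uv xp2 s1 s2).
  all: try by move: xh'; rewrite ltNge leey.
  all: try by move: cx; rewrite /cons_space leNgt ltNye.
- move=> x x' x0 x'0 h; apply: contrapT => nr.
  have sx := U_strict HU (cons_fin x0) (cons_fin x'0) nr.
  have nxp : ~ peak Ri x%:E.
    by case=> _ H; apply: nr; apply: H; apply: cons_fin.
  case: h => [[x'x xlo]|[hix xx']].
  + have xlo' : (x%:E < (peak_lo Ri))%E.
      rewrite lt_neqAle xlo andbT; apply/eqP => e; apply: nxp; rewrite e.
      exact: Plo.
    have sl := peak_strict HU Plo (cons_fin x0) nxp.
    apply: (vAE x' x (peak_lo Ri)) => //; by rewrite -lte_fin.
  + have hix' : ((peak_hi Ri) < x%:E)%E.
      rewrite lt_neqAle hix andbT; apply/eqP => e; apply: nxp; rewrite -e.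
      exact: Phi.
    have sh := peak_strict HU Phi (cons_fin x0) nxp.
    have [hv Ehv] : exists hv, (peak_hi Ri) = hv by eexists.
    rewrite Ehv in hi0 hix' sh; clear Ehv.
    case: hv hi0 hix' sh => [h| |] h0 hx sh.
    all: try by move: hx; rewrite ltNge leey.
    all: try by move: h0; rewrite leNgt ltNye.
    have h0' : 0 <= h by rewrite -lee_fin.
    have hx' : h < x by rewrite -lte_fin.
    have xx'' : x < x' by rewrite -lte_fin.
    by case: (vA h x x' h0' hx' xx'' sh sx).
Qed.

End File_M.

End Helpers.
Import Helpers.

Theorem lemma4 (n : nat) (D : set pref) :
  (2 <= n)%N ->
  single_peaked `<=` D -> D `<=` in_U ->
  (exists phi : rule_type n,
     [/\ is_rule D phi, own_peak_only D phi, efficient D phi,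
         equal_division_guarantee D phi & NOM D phi]) ->
  D `<=` convex_pref.
Proof.
move=> n2 hSP hDU [phi [hrule hopo heff hedg hnom]] Ri DRi.
apply: convex_of; first exact: hDU.
move=> b s t b0 bs st stt Hz.
exact: (patA n2 hSP hDU hrule hopo heff hedg hnom DRi b0 bs st stt Hz).
Qed.
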